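(* Let $a$ be a tile of an additive poset $A$ and let $I$ be the set of all atoms of $A$ lying in the tail $A_a$. Then the map $2^I_f\to A$, $J\mapsto\sum_{j\in J} j$, is an isomorphism of additive posets from the restricted additive powerset $2^I_f$ onto the additive subposet of $A_a$ generated by $I$ as a $\mathbb{Z}/2\mathbb{Z}$-vector space.
   Context: An additive poset is a pair $(A,\le)$ where $A$ is an abelian group and $\le$ is a partial order on $A$ such that for all $a,b,c\in A$: $(\ast)$ if $b\le a$ and $c\le a$ then $b+c\le a$; $(\ast\ast)$ if $a\le b$ and $a\le c$ then $a\le a+b+c$. Every subgroup with the restricted order is an additive poset (an additive subposet). An isomorphism of additive posets is a bijection that is both a group isomorphism and an order isomorphism. The tail of $a$ is $A_a=\{x:x\le a\}$. Elements $x,y$ are independent if $x\le x+y$. An atom is a nonzero $x$ with $A_x=\{0,x\}$. A tile is a nonzero $a$ such that any two distinct atoms of $A$ in $A_a$ are independent. For a set $I$, $2^I_f$ is the set of finite subsets of $I$ with symmetric difference as addition and inclusion as partial order. *)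

(* Defs.v *)
From HB Require Import structures.
From mathcomp Require Import all_boot all_order all_algebra.
Set Implicit Arguments. Unset Strict Implicit. Unset Printing Implicit Defensive.
Import GRing.Theory.
Local Open Scope ring_scope.

Definition additive_poset (A : zmodType) (le : A -> A -> Prop) : Prop :=
  [/\ (forall x, le x x),
      (forall x y, le x y -> le y x -> x = y),
      (forall x y z, le x y -> le y z -> le x z),
      (forall a b c : A, le b a -> le c a -> le (b + c) a)
    & (forall a b c : A, le a b -> le a c -> le a (a + b + c))].

Definition independent (A : zmodType) (le : A -> A -> Prop) (x y : A) : Prop :=
  le x (x + y).

Definition tail (A : zmodType) (le : A -> A -> Prop) (a : A) : A -> Prop :=
  fun x => le x a.

Definition atom (A : zmodType) (le : A -> A -> Prop) (x : A) : Prop :=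
  x <> 0 /\ (forall y, le y x <-> (y = 0 \/ y = x)).

Definition tile (A : zmodType) (le : A -> A -> Prop) (a : A) : Prop :=
  a <> 0 /\
  (forall x y, atom le x -> atom le y -> tail le a x -> tail le a y ->
     x <> y -> independent le x y).

(* subgroup generated by a set P (as a Z-module; the theorem asserts it is
   the Z/2Z-span) *)
Inductive gen_subgroup (A : zmodType) (P : A -> Prop) : A -> Prop :=
  | gen0 : gen_subgroup P 0
  | gen_in x : P x -> gen_subgroup P x
  | gen_sub x y : gen_subgroup P x -> gen_subgroup P y -> gen_subgroup P (x - y).

(* Finite subsets of I are represented by duplicate-free sequences of
   elements of I (two such are the same subset iff they are =i). *)
Definition finsubset (A : zmodType) (I : A -> Prop) (J : seq A) : Prop :=
  uniq J /\ (forall x, x \in J -> I x).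

(* symmetric difference = addition in 2^I_f *)
Definition symdiff (A : eqType) (J K : seq A) : seq A :=
  [seq x <- J | x \notin K] ++ [seq x <- K | x \notin J].

Definition sumset (A : zmodType) (J : seq A) : A := \sum_(j <- J) j.

(* Main.v *)
Require Import Defs.
From mathcomp Require Import all_boot all_order all_algebra.
Import GRing.Theory.
Local Open Scope ring_scope.
Set Implicit Arguments. Unset Strict Implicit.

Lemma ap_two (A : zmodType) (le : A -> A -> Prop) (hA : additive_poset le) (x : A) :
  x + x = 0.
Proof.
case: (hA) => refl anti trans st sst.
have h1 : le (x + x) x by apply: st; apply: refl.
have h2 : le x (x + x + x) by apply: sst; apply: refl.
have h3 : le (x + x + x) x by apply: st => //; apply: refl.
have e : x + x + x = x by apply: anti.
by have := congr1 (fun t => t - x) e; rewrite /= addrK subrr.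
Qed.

Lemma ap_ge0 (A : zmodType) (le : A -> A -> Prop) (hA : additive_poset le) (x : A) :
  le 0 x.
Proof.
rewrite -(ap_two hA x). case: (hA) => refl anti trans st sst. by apply: st; apply: refl.
Qed.

Lemma ap_opp (A : zmodType) (le : A -> A -> Prop) (hA : additive_poset le) (x : A) :
  - x = x.
Proof. by apply/eqP; rewrite eq_sym -subr_eq0 opprK (ap_two hA). Qed.

Lemma ap_sym (A : zmodType) (le : A -> A -> Prop) (hA : additive_poset le) (x y : A) :
  le x (x + y) -> le y (y + x).
Proof.
case: (hA) => refl anti trans st sst h.
have : le (x + (x + y)) (x + y) by apply: st => //; apply: refl.
by rewrite addrA (ap_two hA) add0r addrC.
Qed.

Lemma ap_indD (A : zmodType) (le : A -> A -> Prop) (hA : additive_poset le) (x y z : A) :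
  le z (z + x) -> le z (z + y) -> le z (z + (x + y)).
Proof.
case: (hA) => refl anti trans st sst h1 h2.
have := sst _ _ _ h1 h2.
by rewrite [z + (z + x)]addrA (ap_two hA) add0r addrCA.
Qed.

Lemma ap_indsum (A : zmodType) (le : A -> A -> Prop) (hA : additive_poset le) (z : A) (s : seq A) :
  (forall y, y \in s -> le z (z + y)) -> le z (z + sumset s).
Proof.
elim: s => [|y s IH] h.
  by rewrite /sumset big_nil addr0; case: hA.
rewrite /sumset big_cons; apply: ap_indD => //.
  by apply: h; rewrite inE eqxx.
by apply: IH => w hw; apply: h; rewrite inE hw orbT.
Qed.

Lemma ap_indsums (A : zmodType) (le : A -> A -> Prop) (hA : additive_poset le) (s t : seq A) :
  (forall x y, x \in s -> y \in t -> le x (x + y)) -> le (sumset s) (sumset s + sumset t).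
Proof.
move=> h; apply: (ap_sym hA); apply: ap_indsum => // x hx.
by apply: (ap_sym hA); apply: ap_indsum => // y hy; apply: h.
Qed.
Lemma sum_split (A : zmodType) (s : seq A) (p : pred A) :
  sumset s = sumset [seq x <- s | p x] + sumset [seq x <- s | ~~ p x].
Proof. by rewrite /sumset !big_filter (bigID p). Qed.

Theorem theorem5p2 (A : zmodType) (le : A -> A -> Prop)
  (hA : additive_poset le) (a : A) (ha : tile le a) :
  let I := fun x => atom le x /\ tail le a x in
  let S := gen_subgroup I in
  (* S is a subset of A_a *)
  (forall x, S x -> tail le a x) /\
  (* the map lands in S *)
  (forall J, finsubset I J -> S (sumset J)) /\
  (* surjective onto S *)
  (forall x, S x -> exists J, finsubset I J /\ sumset J = x) /\
  (* injective on finite subsets *)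
  (forall J K, finsubset I J -> finsubset I K -> sumset J = sumset K -> J =i K) /\
  (* group homomorphism: symmetric difference to + *)
  (forall J K, finsubset I J -> finsubset I K ->
     sumset (symdiff J K) = sumset J + sumset K) /\
  (* order isomorphism: inclusion to le *)
  (forall J K, finsubset I J -> finsubset I K ->
     (le (sumset J) (sumset K) <-> {subset J <= K})).
Proof.
move=> I S.
case: (hA) => refl anti trans st sst.
have indep : forall x y, I x -> I y -> x <> y -> le x (x + y).
  by move=> x y [hx hxa] [hy hya] ne; apply: ha.2.
have hsub : forall J K, finsubset I J -> finsubset I K -> {subset J <= K} ->
    sumset K = sumset J + sumset [seq y <- K | y \notin J].
  move=> J K [uJ _] [uK _] JK.
  rewrite (sum_split K (fun y => y \in J)); congr (_ + _).
  apply: perm_big; apply: uniq_perm => //; first exact: filter_uniq.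
  by move=> x; rewrite mem_filter; case hx: (x \in J) => //=; rewrite JK.
have hle : forall J K, finsubset I J -> finsubset I K -> {subset J <= K} ->
    le (sumset J) (sumset K).
  move=> J K fJ fK JK; rewrite (hsub J K fJ fK JK).
  apply: (ap_indsums hA) => x y hx; rewrite mem_filter => /andP [yJ yK].
  apply: indep; first exact: fJ.2.
    exact: fK.2.
  by move=> e; move: yJ; rewrite -e hx.
have hsym : forall J K, finsubset I J -> finsubset I K ->
     sumset (symdiff J K) = sumset J + sumset K.
  move=> J K [uJ _] [uK _].
  rewrite /symdiff [sumset (_ ++ _)]/sumset big_cat /= -/(sumset _) -/(sumset _).
  rewrite (sum_split J (mem K)) (sum_split K (fun y => y \in J)).
  have -> : sumset [seq x <- J | x \in K] = sumset [seq x <- K | x \in J].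
    apply: perm_big; apply: uniq_perm; try exact: filter_uniq.
    by move=> x; rewrite !mem_filter andbC.
  set u := sumset _; set v := sumset _; set w := sumset _.
  by rewrite addrACA (ap_two hA) add0r.
have finsym : forall J K, finsubset I J -> finsubset I K -> finsubset I (symdiff J K).
  move=> J K [uJ iJ] [uK iK]; split.
    rewrite cat_uniq !filter_uniq //= andbT; apply/hasPn => x.
    by rewrite !mem_filter => /andP [xJ _]; apply/negP => /andP [_ xJ']; move: xJ; rewrite xJ'.
  move=> x; rewrite mem_cat !mem_filter => /orP [/andP [_ h]|/andP [_ h]].
    exact: iJ.
  exact: iK.
have Sadd : forall x y, S x -> S y -> S (x + y).
  by move=> x y hx hy; rewrite -[y](ap_opp hA); apply: gen_sub.
have hord : forall J K, finsubset I J -> finsubset I K ->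
     (le (sumset J) (sumset K) <-> {subset J <= K}).
  move=> J K fJ fK; split; last exact: hle.
  move=> h x xJ; case xK: (x \in K) => //; exfalso.
  have fx : finsubset I [:: x] by split => // y; rewrite inE => /eqP ->; exact: fJ.2.
  have h1 : le x (sumset J).
    have := hle [:: x] J fx fJ; rewrite /sumset big_cons big_nil addr0; apply.
    by move=> y; rewrite inE => /eqP ->.
  have h2 : le x (sumset K) by apply: trans h.
  have h3 : le x (x + sumset K).
    apply: (ap_indsum hA) => y yK; apply: indep; first exact: fJ.2.
      exact: fK.2.
    by move=> e; move: xK; rewrite e yK.
  have := sst _ _ _ h2 h3.
  rewrite (ap_two hA) => h4.
  have x0 : x = 0 by apply: anti => //; apply: (ap_ge0 hA).
  by have [[nz _] _] := fJ.2 x xJ.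
split.
  move=> x hx; elim: hx => [|y Iy|y z _ hy _ hz].
  - exact: (ap_ge0 hA).
  - exact: Iy.2.
  - by rewrite (ap_opp hA); apply: st.
split.
  elim=> [|y J IH] [uJ iJ]; first by rewrite /sumset big_nil; apply: gen0.
  rewrite /sumset big_cons; apply: Sadd.
    by apply: gen_in; apply: iJ; rewrite inE eqxx.
  apply: IH; split; first by case/andP: uJ.
  by move=> z zJ; apply: iJ; rewrite inE zJ orbT.
split.
  move=> x hx; elim: hx => [|y Iy|y z _ [J [fJ eJ]] _ [K [fK eK]]].
  - by exists [::]; split; [split|rewrite /sumset big_nil].
  - exists [:: y]; split; first by split => // w; rewrite inE => /eqP ->.
    by rewrite /sumset big_cons big_nil addr0.
  - exists (symdiff J K); split; first exact: finsym.
    by rewrite hsym // eJ eK (ap_opp hA).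
split.
  move=> J K fJ fK e x; apply/idP/idP.
    by apply: (proj1 (hord J K fJ fK)); rewrite e; apply: refl.
  by apply: (proj1 (hord K J fK fJ)); rewrite e; apply: refl.
by split.
Qed.
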